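(* Let $\mathcal T$ be a local type with encoding dimension $d$. The equality function $\mathcal T\times\mathcal T\to\mathrm{Bool}$, $(x,y)\mapsto[x=y]$, is representable in $\mathrm{ResMLP}(2d,2)$.
   Context: A local type $\mathcal T$ is a finite set $S$ together with an injective encoding $\phi_{\mathcal T}:S\to\mathbb{R}^{d_{\mathcal T}}$. The product type $\mathcal T_1\times\dots\times\mathcal T_n$ has underlying set $S_1\times\dots\times S_n$ and encoding $(s_1,\dots,s_n)\mapsto\phi_1(s_1)\oplus\dots\oplus\phi_n(s_n)$ (concatenation), of dimension $\sum d_i$. $\mathrm{Bool}$ is the local type $\{\mathrm{false},\mathrm{true}\}$ encoded in $\mathbb{R}^1$ by $\mathrm{false}\mapsto0$, $\mathrm{true}\mapsto1$. A single-layer fully connected network of dimension $d$ is $f_{\mathrm{fcn}}(X)=W_2\,\mathrm{ReLU}(W_1X+B_1)+B_2$ with $W_1\in\mathbb{R}^{4d\times d}$, $B_1\in\mathbb{R}^{4d}$, $W_2\in\mathbb{R}^{d\times 4d}$, $B_2\in\mathbb{R}^d$. $\mathrm{ResMLP}(d,L)$ is the set of maps $X\mapsto X^{(L)}$ with $X^{(0)}=X$, $X^{(l)}=X^{(l-1)}+f^{(l)}_{\mathrm{fcn}}(X^{(l-1)})$. A function $f:\mathcal T\to\mathcal R$ between local types is representable in $\mathrm{ResMLP}(d,L)$ ($d\ge\max(d_{\mathcal T},d_{\mathcal R})$) if there is $\tilde f\in\mathrm{ResMLP}(d,L)$ with $\iota_1\circ\phi_{\mathcal R}\circ f=\tilde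 f\circ\iota_2\circ\phi_{\mathcal T}$, where $\iota_1,\iota_2$ pad with zeros into $\mathbb{R}^d$. *)

(* Defs.v *)
From HB Require Import structures.
From mathcomp Require Import all_boot all_order all_algebra.
From mathcomp Require Import reals.
Set Implicit Arguments. Unset Strict Implicit. Unset Printing Implicit Defensive.
Import Order.TTheory GRing.Theory Num.Theory.
Local Open Scope ring_scope.

Section LocalTypes.
Variable R : realType.

Record localType := LocalType {
  lt_carrier : finType;
  lt_dim : nat;
  lt_enc : lt_carrier -> 'cV[R]_lt_dim;
  lt_enc_inj : injective lt_enc }.

Definition prod_enc (T1 T2 : localType) (s : (lt_carrier T1 * lt_carrier T2)%type)
  : 'cV[R]_(lt_dim T1 + lt_dim T2) :=
  col_mx (@lt_enc T1 s.1) (@lt_enc T2 s.2).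

Lemma prod_enc_inj (T1 T2 : localType) : injective (@prod_enc T1 T2).
Proof.
move=> [a1 a2] [b1 b2]; rewrite /prod_enc /= => /eq_col_mx [h1 h2].
by rewrite (lt_enc_inj h1) (lt_enc_inj h2).
Qed.

Definition prodLT (T1 T2 : localType) : localType :=
  @LocalType (lt_carrier T1 * lt_carrier T2)%type (lt_dim T1 + lt_dim T2)
    (@prod_enc T1 T2) (@prod_enc_inj T1 T2).

Definition bool_enc (b : bool) : 'cV[R]_1 := const_mx (b%:R).

Lemma bool_enc_inj : injective bool_enc.
Proof.
move=> [] [] // /matrixP /(_ ord0 ord0); rewrite !mxE /= => /eqP;
  by rewrite ?oner_eq0 // eq_sym oner_eq0.
Qed.

Definition BoolLT : localType := @LocalType bool 1 bool_enc bool_enc_inj.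

Definition relu n (v : 'cV[R]_n) : 'cV[R]_n := map_mx (fun x => Num.max x 0) v.

Record fcn_params (d : nat) := FcnParams {
  W1 : 'M[R]_(4 * d, d);
  B1 : 'cV[R]_(4 * d);
  W2 : 'M[R]_(d, 4 * d);
  B2 : 'cV[R]_d }.

Definition fcn d (p : fcn_params d) (X : 'cV[R]_d) : 'cV[R]_d :=
  W2 p *m relu (W1 p *m X + B1 p) + B2 p.

Definition resmlp_eval d (ps : seq (fcn_params d)) (X : 'cV[R]_d) : 'cV[R]_d :=
  foldl (fun Y p => Y + fcn p Y) X ps.

Definition ResMLP (d L : nat) (g : 'cV[R]_d -> 'cV[R]_d) : Prop :=
  exists ps : seq (fcn_params d), size ps = L /\ forall X, g X = resmlp_eval ps X.

Definition pad n d (v : 'cV[R]_n) : 'cV[R]_d :=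
  \col_(i < d) (match insub (val i) : option 'I_n with
                | Some j => v j ord0 | None => 0 end).

Definition representable (T U : localType) (f : lt_carrier T -> lt_carrier U)
    (d L : nat) : Prop :=
  (maxn (lt_dim T) (lt_dim U) <= d)%N /\
  exists g : 'cV[R]_d -> 'cV[R]_d, ResMLP L g /\
    forall s : lt_carrier T,
      pad d (@lt_enc U (f s)) = g (pad d (@lt_enc T s)).

End LocalTypes.

Definition eq_fun (R : realType) (T : localType R)
  (p : lt_carrier (prodLT T T)) : lt_carrier (BoolLT R) := p.1 == p.2.

(* Main.v *)
Require Import Defs.
From mathcomp Require Import all_boot all_order all_algebra.
From mathcomp Require Import reals.
From mathcomp Require Import zify ring lra.
Set Implicit Arguments. Unset Strict Implicit. Unset Printing Implicit Defensive.
Import Order.TTheory GRing.Theory Num.Theory.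
Local Open Scope ring_scope.

Section Aux.
Variable R : realType.

Lemma sum_pick n (F : 'I_n -> R) m (Hm : (m < n)%N) :
  \sum_(h < n) (val h == m)%:R * F h = F (Ordinal Hm).
Proof.
rewrite (bigD1 (Ordinal Hm)) //= eqxx mul1r big1 ?addr0 // => h hne.
have /negbTE -> : val h != m.
  by apply: contra hne => /eqP e; apply/eqP/val_inj.
by rewrite mul0r.
Qed.

Lemma maxN_lem (x : R) : - Num.max x 0 + Num.max (- x) 0 = - x.
Proof.
rewrite /Num.max /Order.max.
repeat (case: ifP => ?); lra.
Qed.

Definition mkp n (e1 : nat -> nat -> R) (b1 : nat -> R) (e2 : nat -> nat -> R)
  (b2 : nat -> R) : fcn_params R n :=
 FcnParams
  (\matrix_(h, k) (if (h < n)%N then (val k == val h)%:R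
                   else if (h < n+n)%N then -(val k == (h - n)%N)%:R else e1 h k))
  (\col_h (if (h < n+n)%N then 0 else b1 h))
  (\matrix_(j, h) (-(val h == val j)%:R + (val h == (j + n)%N)%:R
                   + (if (n+n <= h)%N then e2 j h else 0)))
  (\col_j b2 j).

Lemma fcn_mkp n (e1 : nat -> nat -> R) (b1 : nat -> R) (e2 : nat -> nat -> R) (b2 : nat -> R) (X : 'cV[R]_n) (j : 'I_n) :
 fcn (@mkp n e1 b1 e2 b2) X j ord0 = - X j ord0 +
   \sum_(h < 4*n) (if (n+n <= h)%N then
       e2 j h * Num.max (\sum_(k<n) e1 h k * X k ord0 + b1 h) 0 else 0) + b2 j.
Proof.
rewrite /fcn /= !mxE.
rewrite /relu. match goal with |- _ = ?r => set rhs := r end.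
under eq_bigr => h _ do rewrite !mxE mulrDl mulrDl mulNr. rewrite {}/rhs.
rewrite big_split big_split /= sumrN.
have H1 : (j < 4 * n)%N by have := ltn_ord j; lia.
have H2 : (j + n < 4 * n)%N by have := ltn_ord j; lia.
rewrite (sum_pick _ H1) (sum_pick _ H2) /=.
have -> : (j < n + n)%N by have := ltn_ord j; lia.
have -> : (j + n < n + n)%N by have := ltn_ord j; lia.
congr (_ + _); congr (_ + _).
- rewrite (eq_bigr (fun k : 'I_n => (val k == j)%:R * X k ord0)); last first.
    by move=> k _; rewrite !mxE /= ltn_ord.
  rewrite (sum_pick _ (ltn_ord j)).
  rewrite (eq_bigr (fun k : 'I_n => - ((val k == j)%:R * X k ord0))); last first.
    move=> k _; rewrite !mxE /=.
    have -> : (j + n < n)%N = false by lia.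
    have -> : (j + n < n + n)%N by have := ltn_ord j; lia.
    by rewrite addnK mulNr.
  rewrite sumrN (sum_pick _ (ltn_ord j)).
  have -> : Ordinal (ltn_ord j) = j by apply: val_inj.
  rewrite !addr0; exact: maxN_lem.
- apply: eq_bigr => h _.
  case: ifP => hh; last by rewrite mul0r.
  have -> : (h < n + n)%N = false by lia.
  congr (_ * Num.max (_ + _) _); apply: eq_bigr => k _; rewrite !mxE.
  have -> : (h < n)%N = false by lia.
  by have -> : (h < n + n)%N = false by lia.
Qed.



Definition lk m (v : 'cV[R]_m) (k : nat) : R :=
  if insub k is Some j then v j ord0 else 0.

Lemma lk_val m (v : 'cV[R]_m) (k : 'I_m) : lk v k = v k ord0.
Proof. by rewrite /lk valK. Qed.

Lemma lk_ge m (v : 'cV[R]_m) (k : nat) : (m <= k)%N -> lk v k = 0.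
Proof. by move=> h; rewrite /lk insubF // ltnNge h. Qed.

Lemma lk_col d (a b : 'cV[R]_d) k :
  lk (col_mx a b) k = if (k < d)%N then lk a k else lk b (k - d).
Proof.
case: (ltnP k (d + d)) => hk; last first.
  rewrite lk_ge //; case: ifP => h; first by lia.
  by rewrite lk_ge //; lia.
have -> : lk (col_mx a b) k = col_mx a b (Ordinal hk) ord0.
  by rewrite -lk_val.
case: ifP => h.
  have -> : Ordinal hk = lshift d (Ordinal h) by apply: val_inj.
  by rewrite col_mxEu -(lk_val a (Ordinal h)).
have h' : (k - d < d)%N by lia.
have -> : Ordinal hk = rshift d (Ordinal h') by apply: val_inj => /=; lia.
by rewrite col_mxEd -(lk_val b (Ordinal h')).
Qed.

Lemma sum_lk n (v : 'cV[R]_n) m :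
  \sum_(kk < n) (val kk == m)%:R * v kk ord0 = lk v m.
Proof.
case: (ltnP m n) => hm.
  by rewrite (sum_pick _ hm) -(lk_val v (Ordinal hm)).
rewrite lk_ge // big1 // => kk _.
have /negbTE -> : val kk != m.
  by apply/eqP => e; move: hm; rewrite -e leqNgt ltn_ord.
by rewrite mul0r.
Qed.

Lemma pad_lk m n (v : 'cV[R]_m) (i : 'I_n) : pad n v i ord0 = lk v i.
Proof. by rewrite /pad mxE. Qed.

Lemma sum_shift (F : nat -> R) a m :
  \sum_(a <= i < a + m) F i = \sum_(0 <= k < m) F (k + a)%N.
Proof. rewrite -{1}(add0n a) big_addn. by rewrite addKn. Qed.

Lemma lk_pad m n (v : 'cV[R]_m) k : (m <= n)%N -> lk (pad n v) k = lk v k.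
Proof.
move=> hmn; case: (ltnP k n) => hk.
  by rewrite -[k]/(val (Ordinal hk)) lk_val pad_lk.
by rewrite !lk_ge //; lia.
Qed.

Definition e1L (d : nat) (h k : nat) : R :=
  let n := (2 * d)%N in
  if (h < n + n + d)%N then ((k == h - (n + n))%N%:R - (k == h - (n + n) + d)%N%:R)
  else if (h < n + n + n)%N then ((k == h - (n + n))%N%:R - (k == h - (n + n) - d)%N%:R)
  else 0.

Definition e2L (d : nat) (K : R) (j h : nat) : R :=
  (j == 0)%N%:R * K * (h < 2 * d + 2 * d + 2 * d)%N%:R.

Lemma layer1 (d : nat) (K : R) (a b : 'cV[R]_d) (j : 'I_(2*d)) :
  let X := pad (2*d) (col_mx a b) in
  (X + fcn (@mkp (2*d) (e1L d) (fun _ => 0) (e2L d K) (fun _ => 0)) X) j ord0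
  = (val j == 0)%:R * K * \sum_(0 <= k < d)
       (Num.max (lk a k - lk b k) 0 + Num.max (lk b k - lk a k) 0).
Proof.
move=> X; rewrite mxE fcn_mkp addr0 addrA addrN add0r.
set n := (2 * d)%N.
pose G (h : nat) : R := if (n + n <= h)%N && (h < n + n + n)%N then
   Num.max (\sum_(k < n) e1L d h k * X k ord0 + 0) 0 else 0.
rewrite (eq_bigr (fun h : 'I_(4 * n) => (val j == 0)%:R * K * G h)); last first.
  move=> h _; rewrite /G /e2L -/n; case: ifP => h1 //=; last by rewrite mulr0.
  by case: ifP => h2; rewrite ?mulr1 ?mulr0 ?mul0r.
rewrite -big_distrr /=; congr (_ * _).
rewrite -(big_mkord xpredT G).
rewrite (big_cat_nat _ (n := n + n)) //=; last by lia.
rewrite (big_cat_nat _ (m := n + n) (n := n + n + n) (p := 4 * n)) //=; try lia. rewrite addrA.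
rewrite [Z in Z + _ + _]big_nat_cond [Z in Z + _ + _]big1; last first.
  by move=> h /andP [/andP [_ hl] _]; rewrite /G; case: ifP => //; lia.
rewrite [Z in _ + _ + Z]big_nat_cond [Z in _ + _ + Z]big1; last first.
  by move=> h /andP [/andP [hl _] _]; rewrite /G; case: ifP => //; lia.
rewrite add0r addr0.
rewrite (big_cat_nat _ (m := n + n) (n := n + n + d) (p := n + n + n)) //=; try lia.
rewrite (sum_shift _ (n + n) d).
have -> : (n + n + n = n + n + d + d)%N by lia.
rewrite (sum_shift _ (n + n + d) d).
rewrite [RHS]big_split /=; congr (_ + _); rewrite big_nat_cond [RHS]big_nat_cond;
  apply: eq_bigr => k /andP [/andP [_ hk] _]; rewrite /G.
- rewrite /e1L -/n.
  have -> : (n + n <= k + (n + n) < n + n + n)%N by lia.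
  have -> : (k + (n + n) < n + n + d)%N by lia.
  rewrite addnK addr0.
  under eq_bigr => kk _ do rewrite mulrBl.
  rewrite sumrB.
  rewrite !sum_lk !lk_pad ?lk_col ?hk; try lia.
  have -> : (k + d < d)%N = false by lia.
  by rewrite addnK.
- rewrite /e1L -/n.
  have -> : (n + n <= k + (n + n + d) < n + n + n)%N by lia.
  have -> : (k + (n + n + d) < n + n + d)%N = false by lia.
  have -> : (k + (n + n + d) < n + n + n)%N by lia.
  have -> : (k + (n + n + d) - (n + n) = k + d)%N by lia.
  rewrite addnK addr0.
  under eq_bigr => kk _ do rewrite mulrBl.
  rewrite sumrB.
  rewrite !sum_lk !lk_pad ?lk_col ?hk; try lia.
  have -> : (k + d < d)%N = false by lia.
  by rewrite addnK.
Qed.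


Definition e1M (n h k : nat) : R :=
  ((h == n + n) || (h == n + n + 1))%N%:R * (k == 0)%N%:R.
Definition b1M (n h : nat) : R := - (h == n + n + 1)%N%:R.
Definition e2M (n j h : nat) : R :=
  (j == 0)%N%:R * (- (h == n + n)%N%:R + (h == n + n + 1)%N%:R).
Definition b2M (j : nat) : R := (j == 0)%N%:R.

Lemma layer2 n (Y : 'cV[R]_n) (j : 'I_n) : (0 < n)%N ->
  (Y + fcn (@mkp n (e1M n) (b1M n) (e2M n) b2M) Y) j ord0 =
  (val j == 0)%:R * (1 - Num.max (lk Y 0) 0 + Num.max (lk Y 0 - 1) 0).
Proof.
move=> n0; rewrite mxE fcn_mkp !addrA addrN add0r.
set y := lk Y 0.
rewrite (eq_bigr (fun h : 'I_(4*n) =>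
   (val h == (n + n)%N)%:R * ((val j == 0)%:R * - Num.max y 0) +
   (val h == (n + n + 1)%N)%:R * ((val j == 0)%:R * Num.max (y - 1) 0))); last first.
  move=> h _; rewrite /e2M /e1M /b1M.
  have vh : val h = nat_of_ord h by [].
  have vj : val j = nat_of_ord j by [].
  rewrite !vh !vj.
  set c := ((val h == n + n) || (val h == n + n + 1))%N%:R.
  rewrite (eq_bigr (fun k : 'I_n => c * ((val k == 0)%:R * Y k ord0))); last first.
    by move=> k _; rewrite mulrA.
  rewrite -big_distrr sum_lk -/y /c.
  case: (eqVneq (nat_of_ord h) (n + n)%N) => [E|N1].
    rewrite E /=.
    have -> : (n + n == n + n + 1)%N = false by lia.
    rewrite leqnn /= !mul1r subr0 mul0r !addr0; ring.
  case: (eqVneq (nat_of_ord h) (n + n + 1)%N) => [E|N2].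
    rewrite E /=.
    have -> : (n + n <= n + n + 1)%N by lia.
    rewrite mul1r oppr0 add0r mulr1 mul0r add0r mul1r; ring.
  rewrite !mul0r addr0; case: ifP => _; last by rewrite addr0.
  have X0 : (1 *- false : R) = 0 by apply/eqP; rewrite oppr_eq0.
  by rewrite addr0 X0 mulr0 mul0r.
rewrite big_split /=.
have H1 : (n + n < 4 * n)%N by lia.
have H2 : (n + n + 1 < 4 * n)%N by lia.
rewrite (sum_pick _ H1) (sum_pick _ H2) /b2M.
ring.
Qed.


Lemma maxabs (u : R) : Num.max u 0 + Num.max (- u) 0 = `|u|.
Proof.
rewrite /Num.max /Order.max; case: (lerP 0 u) => hu.
  rewrite ger0_norm //; repeat (case: ifP => ?); lra.
rewrite ltr0_norm //; repeat (case: ifP => ?); lra.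
Qed.

Lemma final_val (c : R) (hc : c = 0 \/ 1 <= c) :
  1 - Num.max c 0 + Num.max (c - 1) 0 = (c == 0)%:R.
Proof.
case: hc => [->|hc].
  rewrite eqxx /= ?mulr1n /Num.max /Order.max; repeat (case: ifP => ?); lra.
have -> : (c == 0) = false by rewrite gt_eqF // (lt_le_trans ltr01 hc).
rewrite /Num.max /Order.max; repeat (case: ifP => ?); rewrite /= ?mulr0n; lra.
Qed.

End Aux.

Theorem proposition4 (R : realType) (T : localType R) :
  (0 < lt_dim T)%N ->
  representable (@eq_fun R T) (2 * lt_dim T) 2.
Proof.
move=> d0; set d := lt_dim T.
split; first by rewrite /= geq_max; apply/andP; split; lia.
pose S (x y : lt_carrier T) : R := \sum_(0 <= k < d)
   (Num.max (lk (lt_enc x) k - lk (lt_enc y) k) 0 +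
    Num.max (lk (lt_enc y) k - lk (lt_enc x) k) 0).
pose K : R := \sum_(p : (lt_carrier T * lt_carrier T)%type | p.1 != p.2) (S p.1 p.2)^-1.
set n := (2 * d)%N.
pose p1 := @mkp R n (e1L R d) (fun _ => 0) (e2L d K) (fun _ => 0).
pose p2 := @mkp R n (e1M R n) (b1M R n) (e2M R n) (b2M R).
exists (resmlp_eval [:: p1; p2]); split; first by exists [:: p1; p2].
have n0 : (0 < n)%N by rewrite /n; lia.
have Sabs : forall x y, S x y = \sum_(k < d) `|lt_enc x k ord0 - lt_enc y k ord0|.
  move=> x y; rewrite /S big_mkord; apply: eq_bigr => k _.
  by rewrite !lk_val -maxabs opprB.
have S0 : forall x, S x x = 0.
  by move=> x; rewrite Sabs big1 // => k _; rewrite subrr normr0.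
have Spos : forall x y, x != y -> 0 < S x y.
  move=> x y hxy; rewrite Sabs.
  have : lt_enc x != lt_enc y by apply: contra hxy => /eqP /lt_enc_inj ->.
  case: (pickP (fun k : 'I_d => lt_enc x k ord0 != lt_enc y k ord0)) => [k hk | H] hne; last first.
    case/eqP: hne; apply/matrixP => i j; rewrite ord1.
    by apply/eqP; move: (H i) => /negbFE.
  rewrite (bigD1 k) //=; apply: (lt_le_trans (y := `|lt_enc x k ord0 - lt_enc y k ord0|)).
    by rewrite normr_gt0 subr_eq0.
  by rewrite lerDl sumr_ge0.
have KS : forall x y, x != y -> 1 <= K * S x y.
  move=> x y hxy.
  have hS := Spos x y hxy.
  have hK : (S x y)^-1 <= K.
    rewrite /K (bigD1 (x, y)) //= lerDl sumr_ge0 // => p _.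
    rewrite invr_ge0 Sabs sumr_ge0 // => k _; exact: normr_ge0.
  rewrite -(mulVf (lt0r_neq0 hS)).
  by rewrite ler_wpM2r // ltW.
move=> [x y].
rewrite /resmlp_eval /=.
set X := pad n (prod_enc (x, y)).
have HY : forall j, (X + fcn p1 X) j ord0 = (val j == 0)%:R * K * S x y.
  by move=> j; exact: (layer1 K (lt_enc x) (lt_enc y) j).
have ly : lk (X + fcn p1 X) 0 = K * S x y.
  by rewrite -[0%N]/(val (Ordinal n0)) lk_val HY /= mul1r.
apply/matrixP => i k; rewrite ord1 layer2 // ly pad_lk.
have hc : K * S x y = 0 \/ 1 <= K * S x y.
  case: (eqVneq x y) => [->|hxy]; first by left; rewrite S0 mulr0.
  by right; apply: KS.
rewrite final_val // /eq_fun /=.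
have -> : (K * S x y == 0) = (x == y).
  case: (eqVneq x y) => [->|hxy]; first by rewrite S0 mulr0 eqxx.
  by rewrite gt_eqF // (lt_le_trans ltr01 (KS _ _ hxy)).
case: (posnP (val i)) => hi.
  have -> : nat_of_ord i = 0%N by exact: hi.
  rewrite -[0%N]/(val (@ord0 0)) lk_val /bool_enc mxE.
  by rewrite mul1r.
rewrite lk_ge; last exact: hi.
by rewrite /= mul0r.
Qed.
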